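(* Let $M=(E,\mathcal{I})$ be a matroid of rank $r$, $u:E\to\mathbb{Z}_{\ge0}$ integer capacities and $k\in\mathbb{N}$. Suppose bases $B_1,\dots,B_k$ (with insertion levels) and levels $\ell:E\to\mathbb{Z}_{\ge0}$ satisfy invariants (I1)–(I3) with height $h>r+2$. Then there exists a level $j$ such that $$\sum_{e\in E}\min\{u(e),x(e)\}\ \ge\ u(E_{<j})+k\,\mathrm{rank}(E_{\ge j}).$$ Consequently $B_1,\dots,B_k$ is an optimal solution of the $k$-fold matroid union problem and $E_{\ge j}$ is an optimal dual solution.
   Context: For $e\in E$, $x(e)=|\{i: e\in B_i\}|$; $e$ is uncovered if $x(e)<u(e)$. $u(T)=\sum_{e\in T}u(e)$. The $k$-fold matroid union problem maximizes $\sum_e\min\{u(e),x(e)\}$ over $k$ bases; the dual minimizes $k\,\mathrm{rank}(S)+u(E\setminus S)$ over $S\subseteq E$, and the optimal values coincide. Each element $e\in B_i$ carries an insertion level (the value of $\ell(e)$ when $e$ was inserted into $B_i$; levels never decrease, so insertion levels are at most current levels). $E_j=\{e:\ell(e)=j\}$ and analogously $E_{<j},E_{\ge j},E_{>j}$; $B_{i,\ge j}$ denotes the elements of $B_i$ with insertion level at least $j$. Invariants: (I1) $\ell(e)=0$ whenever $e$ lies in strictly more than $u(e)$ bases; (I2) for all $i$ and $j$, $B_{i,\ge j}$ spans $E_{>j}$; (I3) every uncovered $e$ has $\ell(e)\ge h$. *)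

(* Defs.v *)
From mathcomp Require Import all_boot.
Set Implicit Arguments. Unset Strict Implicit. Unset Printing Implicit Defensive.

Definition is_matroid (E : finType) (indep : {set E} -> bool) : Prop :=
  [/\ indep set0,
      (forall A B : {set E}, A \subset B -> indep B -> indep A) &
      (forall A B : {set E}, indep A -> indep B -> #|A| < #|B| ->
         exists2 e, e \in B :\: A & indep (e |: A))].

Definition mrank (E : finType) (indep : {set E} -> bool) (S : {set E}) : nat :=
  \max_(A in powerset S | indep A) #|A|.

Definition is_base (E : finType) (indep : {set E} -> bool) (B : {set E}) : bool :=
  indep B && [forall e, (e \notin B) ==> ~~ indep (e |: B)].

Definition mclosure (E : finType) (indep : {set E} -> bool) (A : {set E}) : {set E} :=
  [set e | mrank indep (e |: A) == mrank indep A].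

Definition spans (E : finType) (indep : {set E} -> bool) (A T : {set E}) : bool :=
  T \subset mclosure indep A.

Definition mult (E : finType) (k : nat) (B : 'I_k -> {set E}) (e : E) : nat :=
  #|[set i | e \in B i]|.

Definition union_value (E : finType) (k : nat) (u : E -> nat)
  (B : 'I_k -> {set E}) : nat :=
  \sum_(e : E) minn (u e) (mult B e).

Definition usum (E : finType) (u : E -> nat) (T : {set E}) : nat :=
  \sum_(e in T) u e.

Definition lev_lt (E : finType) (l : E -> nat) (j : nat) : {set E} := [set e | l e < j].
Definition lev_ge (E : finType) (l : E -> nat) (j : nat) : {set E} := [set e | j <= l e].
Definition lev_gt (E : finType) (l : E -> nat) (j : nat) : {set E} := [set e | j < l e].

Definition Bge (E : finType) (k : nat) (B : 'I_k -> {set E})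
  (ins : 'I_k -> E -> nat) (i : 'I_k) (j : nat) : {set E} :=
  [set e in B i | j <= ins i e].

(* Main.v *)
Require Import Defs.
From mathcomp Require Import all_boot.
Set Implicit Arguments. Unset Strict Implicit.

Section S.
Variables (E : finType) (indep : {set E} -> bool).

Lemma mrank_le_card (S : {set E}) : mrank indep S <= #|S|.
Proof.
apply/bigmax_leqP => A; rewrite powersetE => /andP[sAS _].
exact: subset_leq_card.
Qed.

Lemma mrank_ge (I S : {set E}) : I \subset S -> indep I -> #|I| <= mrank indep S.
Proof. move=> sIS iI; rewrite /mrank; apply: (@leq_bigmax_cond _ (fun A : {set E} => (A \in powerset S) && indep A) (fun A : {set E} => #|A|) I); by rewrite powersetE sIS. Qed.

Lemma mrank_indep (A : {set E}) : indep A -> mrank indep A = #|A|.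
Proof. move=> iA; apply/eqP; rewrite eqn_leq mrank_le_card /=; exact: mrank_ge. Qed.

Lemma mrank_mono (S T : {set E}) : S \subset T -> mrank indep S <= mrank indep T.
Proof.
move=> sST; apply/bigmax_leqP => A; rewrite powersetE => /andP[sAS iA].
apply: mrank_ge => //; exact: subset_trans sST.
Qed.

Lemma span_rank (A T : {set E}) : is_matroid indep -> indep A -> spans indep A T ->
  mrank indep T <= #|A|.
Proof.
case=> _ _ aug iA /subsetP sp.
apply/bigmax_leqP => I; rewrite powersetE => /andP[sIT iI].
rewrite leqNgt; apply/negP => ltAI.
have [e /setDP[eI eA] ieA] := aug A I iA iI ltAI.
have := sp e (subsetP sIT e eI); rewrite inE => /eqP.
rewrite (mrank_indep iA) (mrank_indep ieA) cardsU1 eA => /eqP.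
by rewrite add1n eqn_leq ltnn.
Qed.

Lemma card_sum (T : finType) (A : {set T}) : #|A| = \sum_(x : T) (x \in A).
Proof. by rewrite -sum1_card big_mkcond. Qed.

Lemma sum_mult k (B : 'I_k -> {set E}) (S : {set E}) :
  \sum_(e in S) mult B e = \sum_(i < k) #|B i :&: S|.
Proof.
rewrite /mult.
under eq_bigr => e _ do rewrite card_sum.
rewrite exchange_big /=; apply: eq_bigr => i _.
rewrite card_sum big_mkcond /=; apply: eq_bigr => e _.
by rewrite !inE; case: (e \in S); case: (e \in B i).
Qed.

Lemma weak_dual k (u : E -> nat) (B : 'I_k -> {set E}) (S : {set E}) :
  is_matroid indep -> (forall i, indep (B i)) ->
  union_value u B <= usum u (~: S) + k * mrank indep S.
Proof.
case=> _ sub _ iB.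
rewrite /union_value (bigID (fun e => e \in S)) /= addnC.
apply: leq_add.
  rewrite /usum; apply: (@leq_trans (\sum_(e | e \notin S) u e)).
    by apply: leq_sum => e _; exact: geq_minl.
  by apply: eq_leq; apply: eq_bigl => e; rewrite inE.
apply: (@leq_trans (\sum_(e in S) mult B e)).
  by apply: leq_sum => e _; exact: geq_minr.
rewrite sum_mult.
have H : forall i, #|B i :&: S| <= mrank indep S.
  move=> i; apply: mrank_ge; first exact: subsetIr.
  exact: (sub _ _ (subsetIl _ _) (iB i)).
apply: (@leq_trans (\sum_(i < k) mrank indep S)); first by apply: leq_sum => i _; exact: H.
by rewrite sum_nat_const card_ord.
Qed.

Lemma pigeon (f : nat -> nat) n :
  (forall j, 0 < j <= n -> f j.+1 < f j) -> f n.+1 + n <= f 1.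
Proof.
elim: n => [|n IH] H; first by rewrite addn0.
have H1 : f n.+2 < f n.+1 by apply: H; rewrite /= leqnn.
have : f n.+1 + n <= f 1.
  by apply: IH => j /andP[j0 jn]; apply: H; rewrite j0 (leqW jn).
by rewrite addnS; apply: leq_trans; rewrite ltn_add2r.
Qed.

Lemma exists_flat (f : nat -> nat) r : f 1 <= r ->
  exists j, [/\ 0 < j, j <= r.+1 & f j <= f j.+1].
Proof.
move=> f1.
case: (boolP [exists j : 'I_r.+2, (0 < j) && (f j <= f j.+1)]).
  by case/existsP => j /andP[j0 fj]; exists j; split => //; rewrite -ltnS.
move=> /existsPn Hn; exfalso.
have : f r.+2 + r.+1 <= f 1.
  apply: pigeon => j /andP[j0 jr].
  have := Hn (Ordinal (jr : j < r.+2)); rewrite /= j0 /= -ltnNge; exact.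
rewrite addnS ltnNge => /negP; apply; exact: leq_trans f1 (leq_addl _ _).
Qed.

Lemma value_split k (u : E -> nat) (B : 'I_k -> {set E}) (l : E -> nat) h j :
  (forall e, u e < mult B e -> l e = 0) ->
  (forall e, mult B e < u e -> h <= l e) -> 0 < j -> j <= h ->
  union_value u B = usum u (lev_lt l j) + \sum_(i < k) #|B i :&: lev_ge l j|.
Proof.
move=> I1 I3 j0 jh.
rewrite /union_value (bigID (fun e => e \in lev_ge l j)) /= addnC -sum_mult.
congr (_ + _).
  rewrite /usum; apply: eq_big => e; first by rewrite !inE ltnNge.
  rewrite inE -ltnNge => lt; apply/minn_idPl; rewrite leqNgt; apply/negP => /I3.
  by move=> /(leq_trans (leq_trans lt jh)); rewrite ltnn.
apply: eq_bigr => e; rewrite inE => le; apply/minn_idPr; rewrite leqNgt.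
by apply/negP => /I1 l0; move: le; rewrite l0 leqNgt j0.
Qed.
End S.

Theorem mainTheorem2 (E : finType) (indep : {set E} -> bool)
  (u : E -> nat) (k : nat) (B : 'I_k -> {set E}) (ins : 'I_k -> E -> nat)
  (l : E -> nat) (h : nat) :
  is_matroid indep ->
  (forall i, is_base indep (B i)) ->
  (* insertion levels are at most current levels *)
  (forall i e, e \in B i -> ins i e <= l e) ->
  (* (I1) *)
  (forall e, u e < mult B e -> l e = 0) ->
  (* (I2) *)
  (forall i j, spans indep (Bge B ins i j) (lev_gt l j)) ->
  (* (I3) *)
  (forall e, mult B e < u e -> h <= l e) ->
  mrank indep [set: E] + 2 < h ->
  exists j : nat,
    [/\ usum u (lev_lt l j) + k * mrank indep (lev_ge l j) <= union_value u B,
        (* B is optimal for the k-fold matroid union problem *)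
        (forall B' : 'I_k -> {set E}, (forall i, is_base indep (B' i)) ->
           union_value u B' <= union_value u B) &
        (* E_{>= j} is an optimal dual solution *)
        (forall S : {set E},
           k * mrank indep (lev_ge l j) + usum u (~: lev_ge l j)
           <= k * mrank indep S + usum u (~: S))].
Proof.
move=> M bB insl I1 I2 I3 hr.
have iB : forall i, indep (B i) by move=> i; case/andP: (bB i).
have [_ sub_ _] := M.
have [j [j0 jr fj]] := exists_flat (f := fun n => mrank indep (lev_ge l n))
  (mrank_mono indep (subsetT (lev_ge l 1))).
have jh : j <= h by apply: leq_trans jr _; apply: leq_trans hr; rewrite addn2 ltnW.
have geC : ~: lev_ge l j = lev_lt l j by apply/setP => e; rewrite !inE ltnNge.
have key : usum u (lev_lt l j) + k * mrank indep (lev_ge l j) <= union_value u B.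
  rewrite (value_split I1 I3 j0 jh) leq_add2l.
  apply: (@leq_trans (\sum_(i < k) mrank indep (lev_ge l j))).
    by rewrite sum_nat_const card_ord.
  apply: leq_sum => i _.
  have gt : lev_ge l j.+1 = lev_gt l j by apply/setP => e; rewrite !inE.
  apply: (leq_trans fj); rewrite /= gt.
  have iBge : indep (Bge B ins i j).
    by apply: (sub_ _ (B i)) (iB i); apply/subsetP => e; rewrite inE => /andP[].
  apply: (leq_trans (span_rank M iBge (I2 i j))).
  apply: subset_leq_card; apply/subsetP => e; rewrite !inE => /andP[eB je].
  by rewrite eB (leq_trans je (insl _ _ eB)).
exists j; split => //.
  move=> B' bB'.
  have iB' : forall i, indep (B' i) by move=> i; case/andP: (bB' i).
  apply: leq_trans (weak_dual u (lev_ge l j) M iB') _.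
  by rewrite geC.
move=> S; rewrite geC addnC; apply: leq_trans key _.
by rewrite addnC; apply: weak_dual.
Qed.
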